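(* Let $P_S,H_{SR},H_{SD},H_{RD},\sigma_R^2,\sigma_D^2>0$ and $\eta\in(0,1]$. Set $C_{SR}=\log(1+P_SH_{SR}/\sigma_R^2)$, $C_{SD}=\log(1+P_SH_{SD}/\sigma_D^2)$, $a=C_{SR}-C_{SD}$, $b=C_{SD}$, $c=\eta H_{SR}H_{RD}P_S/\sigma_D^2$, and assume $a>0$. Let $$f_1(\lambda)=\lambda b+(1-\lambda)\Big(b+\log\Big(1+\frac{c\lambda}{1-\lambda}\Big)\Big),\quad \lambda\in(0,1),$$ and consider the problem $\max_{\lambda\in(0,1)}\min\{\lambda C_{SR},\,f_1(\lambda)\}$. Then: (i) the equation $\lambda C_{SR}=f_1(\lambda)$ has exactly one solution $\lambda_1\in(0,1)$, namely $$\lambda_1=\frac{-\frac{1}{a}\mathcal W_{-1}\!\big(-\frac{a}{c}e^{-b-\frac{a}{c}}\big)-\frac1c}{1-\frac{1}{a}\mathcal W_{-1}\!\big(-\frac{a}{c}e^{-b-\frac{a}{c}}\big)-\frac1c};$$ (ii) $f_1$ has exactly one stationary point $\lambda_2\in(0,1)$, namely $$\lambda_2=\frac{e^{\mathcal W_0(\frac{c-1}{e})+1}-1}{e^{\mathcal W_0(\frac{c-1}{e})+1}+c-1};$$ (iii) $\lambda^*=\max\{\lambda_1,\lambda_2\}$ attains the maximum of $\min\{\lambda C_{SR},f_1(\lambda)\}$ over $\lambda\in(0,1)$.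
   Context: $\log$ is the natural logarithm. $\mathcal W_0$ and $\mathcal W_{-1}$ denote the principal and the lower real branches of the Lambert W function (the real solutions $w$ of $we^w=x$ with $w\ge -1$ and $w\le -1$, respectively, for $x\ge -1/e$, resp. $x\in[-1/e,0)$). This is the optimal time-fraction problem for the ''ideal'' energy-harvesting relay protocol with mutual-information accumulation at the destination: $\lambda$ is the fraction of time the source broadcasts before the relay decodes, the relay forwarding power is $\eta H_{SR}P_S\lambda/(1-\lambda)$, and the achievable rate is $\min\{\lambda C_{SR},\lambda C_{SD}+(1-\lambda)J\}$ with $J=C_{SD}+\log(1+P_RH_{RD}/\sigma_D^2)$, which equals $f_1(\lambda)$ in the second term. *)

(* Defs.v *)
From Stdlib Require Import Reals ClassicalEpsilon.
Open Scope R_scope.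

(* Principal real branch of Lambert W: the real w >= -1 with w e^w = x
   (meaningful for x >= -1/e; an arbitrary value otherwise). *)
Definition W0 (x : R) : R :=
  epsilon (inhabits 0) (fun w => -1 <= w /\ w * exp w = x).

(* Lower real branch of Lambert W: the real w <= -1 with w e^w = x
   (meaningful for -1/e <= x < 0; an arbitrary value otherwise). *)
Definition Wm1 (x : R) : R :=
  epsilon (inhabits 0) (fun w => w <= -1 /\ w * exp w = x).

Definition f1 (b c lam : R) : R :=
  lam * b + (1 - lam) * (b + ln (1 + c * lam / (1 - lam))).

(* Main.v *)
Require Import Defs.
From Stdlib Require Import Reals Lra ClassicalEpsilon.
From Coquelicot Require Import Coquelicot.
Open Scope R_scope.
Lemma ln_le_xm1 x : 0 < x -> ln x <= x - 1.
Proof. intros H. pose proof (exp_ineq1_le (ln x)). rewrite exp_ln in H0; lra. Qed.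
Lemma ln_ge_1m x : 0 < x -> 1 - / x <= ln x.
Proof. intros H. pose proof (ln_le_xm1 (/ x) (Rinv_0_lt_compat _ H)).
  rewrite ln_Rinv in H0 by lra. lra. Qed.

Definition hW (w : R) := w * exp w.

Lemma hW_deriv x : derivable_pt_lim hW x ((1 + x) * exp x).
Proof. apply is_derive_Reals. unfold hW. auto_derive; auto. ring. Qed.

Lemma hW_incr u w : -1 <= u -> u < w -> hW u < hW w.
Proof. intros H1 H2.
  destruct (MVT_cor2 hW (fun x => (1 + x) * exp x) u w H2 (fun c _ => hW_deriv c)) as [x [E Hx]].
  assert (0 < (1 + x) * exp x * (w - u)).
  { apply Rmult_lt_0_compat; [apply Rmult_lt_0_compat; [lra| apply exp_pos] | lra]. }
  lra. Qed.

Lemma hW_decr u w : w <= -1 -> u < w -> hW w < hW u.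
Proof. intros H1 H2.
  destruct (MVT_cor2 hW (fun x => (1 + x) * exp x) u w H2 (fun c _ => hW_deriv c)) as [x [E Hx]].
  assert (0 < (-(1 + x)) * exp x * (w - u)).
  { apply Rmult_lt_0_compat; [apply Rmult_lt_0_compat; [lra| apply exp_pos] | lra]. }
  lra. Qed.

Lemma hW_m1 : hW (-1) = - / exp 1.
Proof. unfold hW. replace (exp (-1)) with (/ exp 1). ring. rewrite <- exp_Ropp; f_equal; ring. Qed.

Lemma hW_ge w : - / exp 1 <= hW w.
Proof. rewrite <- hW_m1. destruct (Rtotal_order w (-1)) as [H|[H|H]].
  - left. apply hW_decr; lra.
  - subst; lra.
  - left; apply hW_incr; lra. Qed.

Lemma hW_cont : continuity hW.
Proof. intros x. apply derivable_continuous_pt. exists ((1+x)*exp x). apply hW_deriv. Qed.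

Lemma W0_ex z : - / exp 1 <= z -> exists w, -1 <= w /\ w * exp w = z.
Proof. intros Hz.
  set (M := Rabs z + 1).
  assert (HM : z < hW M).
  { unfold hW, M. pose proof (exp_ineq1_le (Rabs z + 1)). pose proof (Rle_abs z).
    pose proof (Rabs_pos z).
    assert (1 <= exp (Rabs z + 1)) by lra. nra. }
  assert (Hm1 : -1 <= M) by (unfold M; pose proof (Rabs_pos z); lra).
  destruct (IVT_cor (fun w => hW w - z) (-1) M) as [w [Hw E]].
  - intros x. apply continuity_pt_minus. apply hW_cont. apply continuity_pt_const. intros ? ?; auto.
  - lra.
  - rewrite hW_m1. assert (- / exp 1 - z <= 0) by lra. nra.
  - exists w. split. lra. unfold hW in E. lra.
Qed.

Lemma Wm1_ex z : - / exp 1 <= z -> z < 0 -> exists w, w <= -1 /\ w * exp w = z.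
Proof. intros Hz Hz0.
  set (K := 4 / (- z) + 1).
  assert (HK : 1 <= K). { unfold K. assert (0 < 4 / - z) by (apply Rdiv_lt_0_compat; lra). lra. }
  assert (HM : hW (- K) > z).
  { unfold hW. rewrite exp_Ropp.
    assert (E: exp K = exp (K/2) * exp (K/2)) by (rewrite <- exp_plus; f_equal; field).
    pose proof (exp_ineq1_le (K/2)).
    assert (exp K > K * K / 4) by (rewrite E; nra).
    assert (0 < exp K) by apply exp_pos.
    assert (K * / exp K < - z).
    { apply Rmult_lt_reg_r with (exp K); auto. rewrite Rmult_assoc, Rinv_l by lra.
      assert (K * 4 / (-z) < K * K) .
      { unfold K. unfold Rdiv. assert (0 < / - z) by (apply Rinv_0_lt_compat; lra).
        nra. }
      assert (K * 4 <  K * K * (-z)).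
      { apply Rmult_lt_reg_r with (/ (-z)). apply Rinv_0_lt_compat; lra.
        replace (K * K * - z * / - z) with (K*K) by (field; lra). lra. }
      nra. }
    lra. }
  destruct (IVT_cor (fun w => hW w - z) (-K) (-1)) as [w [Hw E]].
  - intros x. apply continuity_pt_minus. apply hW_cont. apply continuity_pt_const. intros ? ?; auto.
  - lra.
  - rewrite hW_m1. assert (- / exp 1 - z <= 0) by lra. nra.
  - exists w. split. lra. unfold hW in E. lra.
Qed.
Definition vv (c l : R) := 1 + c * l / (1 - l).
Definition DD (c l : R) := 1 - ln (vv c l) + (c - 1) / vv c l.

Lemma vv_gt1 c l : 0 < c -> 0 < l < 1 -> 1 < vv c l.
Proof. intros Hc Hl. unfold vv. assert (0 < c * l / (1 - l)).
  { apply Rdiv_lt_0_compat; nra. } lra. Qed.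

Lemma vv_eq c l : l < 1 -> (1 - l) * vv c l = 1 + (c - 1) * l.
Proof. intros H. unfold vv. field. lra. Qed.

Lemma f1_deriv b c l : 0 < c -> 0 < l < 1 -> derivable_pt_lim (f1 b c) l (DD c l).
Proof. intros Hc Hl. pose proof (vv_gt1 c l Hc Hl) as Hv. apply is_derive_Reals.
  assert (E : 1 + c * l * / (1 + - l) = vv c l) by (unfold vv, Rdiv, Rminus; reflexivity).
  unfold f1. auto_derive.
  - rewrite E. lra.
  - rewrite E. unfold DD. set (L := ln (vv c l)). unfold vv. unfold vv in Hv. field.
    split. lra. intro H0. unfold Rdiv in Hv. 
    assert (1 + c * l * / (1 - l) = (1 - l + c * l) / (1 - l)) by (field; lra).
    rewrite H in Hv. rewrite H0 in Hv. unfold Rdiv in Hv. lra.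
Qed.

Lemma f1_alt b c l : l < 1 -> f1 b c l = b + (1 - l) * ln (vv c l).
Proof. intros H. unfold f1, vv. ring. Qed.

Lemma f1_tangent b c l m : 0 < c -> 0 < l < 1 -> 0 < m < 1 ->
  f1 b c l <= f1 b c m + DD c m * (l - m).
Proof. intros Hc Hl Hm.
  pose proof (vv_gt1 c l Hc Hl). pose proof (vv_gt1 c m Hc Hm).
  rewrite !f1_alt by lra. unfold DD.
  assert (E : ln (vv c l) = ln (vv c m) + ln (vv c l / vv c m)).
  { rewrite <- ln_mult. f_equal. field. lra. lra. apply Rdiv_lt_0_compat; lra. }
  pose proof (ln_le_xm1 (vv c l / vv c m) ltac:(apply Rdiv_lt_0_compat; lra)).
  rewrite E.
  assert ((1 - l) * ln (vv c l / vv c m) <= (1 - l) * (vv c l / vv c m - 1)) by (apply Rmult_le_compat_l; lra).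
  assert (Q : (1 - l) * (vv c l / vv c m - 1) = (1 + (c - 1) / vv c m) * (l - m)).
  { unfold vv. field. split. lra. split. nra. lra. }
  nra.
Qed.

Lemma psi_mono c v2 v : 0 < c -> 1 < v2 -> v2 <= v ->
  1 - ln v + (c - 1) / v <= 1 - ln v2 + (c - 1) / v2.
Proof. intros Hc H1 H2.
  assert (E : ln v = ln v2 + ln (v / v2)).
  { rewrite <- ln_mult. f_equal. field. lra. lra. apply Rdiv_lt_0_compat; lra. }
  pose proof (ln_ge_1m (v / v2) ltac:(apply Rdiv_lt_0_compat; lra)).
  rewrite E.
  assert (Q : 1 - / (v / v2) + (c - 1) * (/ v2 - / v) = (v - v2) * (v2 + c - 1) / (v * v2)).
  { field. lra. }
  assert (0 <= (v - v2) * (v2 + c - 1) / (v * v2)).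
  { apply Rmult_le_pos. apply Rmult_le_pos; lra. left; apply Rinv_0_lt_compat; nra. }
  unfold Rdiv in *. lra.
Qed.

Lemma vv_mono c m l : 0 < c -> 0 < m -> m <= l -> l < 1 -> vv c m <= vv c l.
Proof. intros Hc Hm H1 H2. unfold vv.
  assert (c * m / (1 - m) <= c * l / (1 - l)).
  { unfold Rdiv. apply Rmult_le_compat. nra. left; apply Rinv_0_lt_compat; lra. nra.
    apply Rinv_le_contravar; lra. }
  lra. Qed.

Lemma W0_spec z : - / exp 1 <= z -> -1 <= W0 z /\ W0 z * exp (W0 z) = z.
Proof. intros H. unfold W0. apply epsilon_spec. now apply W0_ex. Qed.

Lemma W0_uniq z w : - / exp 1 <= z -> -1 <= w -> w * exp w = z -> w = W0 z.
Proof. intros H H1 H2. destruct (W0_spec z H) as [H3 H4].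
  destruct (Rtotal_order w (W0 z)) as [L|[L|L]]; auto.
  - pose proof (hW_incr _ _ H1 L). unfold hW in *. lra.
  - pose proof (hW_incr _ _ H3 L). unfold hW in *. lra. Qed.

Lemma Wm1_spec z : - / exp 1 <= z -> z < 0 -> Wm1 z <= -1 /\ Wm1 z * exp (Wm1 z) = z.
Proof. intros H H'. unfold Wm1. apply epsilon_spec. now apply Wm1_ex. Qed.

Lemma Wm1_uniq z w : - / exp 1 <= z -> z < 0 -> w <= -1 -> w * exp w = z -> w = Wm1 z.
Proof. intros H H' H1 H2. destruct (Wm1_spec z H H') as [H3 H4].
  destruct (Rtotal_order w (Wm1 z)) as [L|[L|L]]; auto.
  - pose proof (hW_decr _ _ H3 L). unfold hW in *. lra.
  - pose proof (hW_decr _ _ H1 L). unfold hW in *. lra. Qed.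
Lemma Grel a b c l : l < 1 ->
  l * (a + b) - f1 b c l = (1 - l) * (a * (l / (1 - l)) - b - ln (1 + c * (l / (1 - l)))).
Proof. intros H. rewrite f1_alt by lra. unfold vv.
  replace (c * l / (1 - l)) with (c * (l / (1 - l))) by (unfold Rdiv; ring). field. lra. Qed.

Theorem theorem1
  (PS HSR HSD HRD sR2 sD2 eta : R)
  (hPS : 0 < PS) (hHSR : 0 < HSR) (hHSD : 0 < HSD) (hHRD : 0 < HRD)
  (hsR : 0 < sR2) (hsD : 0 < sD2) (heta0 : 0 < eta) (heta1 : eta <= 1) :
  let CSR := ln (1 + PS * HSR / sR2) in
  let CSD := ln (1 + PS * HSD / sD2) in
  let a := CSR - CSD in
  let b := CSD in
  let c := eta * HSR * HRD * PS / sD2 in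
  0 < a ->
  let w1 := Wm1 (- (a / c) * exp (- b - a / c)) in
  let lam1 := (- (1 / a) * w1 - 1 / c) / (1 - (1 / a) * w1 - 1 / c) in
  let lam2 := (exp (W0 ((c - 1) / exp 1) + 1) - 1)
              / (exp (W0 ((c - 1) / exp 1) + 1) + c - 1) in
  let lamstar := Rmax lam1 lam2 in
  (* (i) lam1 is the unique solution in (0,1) of lam * CSR = f1 lam *)
  (0 < lam1 < 1 /\ lam1 * CSR = f1 b c lam1 /\
   (forall lam, 0 < lam < 1 -> lam * CSR = f1 b c lam -> lam = lam1)) /\
  (* (ii) lam2 is the unique stationary point of f1 in (0,1) *)
  (0 < lam2 < 1 /\ derivable_pt_lim (f1 b c) lam2 0 /\
   (forall lam, 0 < lam < 1 -> derivable_pt_lim (f1 b c) lam 0 -> lam = lam2)) /\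
  (* (iii) lamstar attains the max over (0,1) of min(lam CSR, f1 lam) *)
  (0 < lamstar < 1 /\
   forall lam, 0 < lam < 1 ->
     Rmin (lam * CSR) (f1 b c lam) <= Rmin (lamstar * CSR) (f1 b c lamstar)).
Proof.
Proof.
  intros CSR CSD a b c Ha w1 lam1 lam2 lamstar.
  assert (Hb : 0 < b).
  { unfold b, CSD. rewrite <- ln_1. apply ln_increasing. lra.
    assert (0 < PS * HSD / sD2) by (apply Rdiv_lt_0_compat; nra). lra. }
  assert (Hc : 0 < c).
  { unfold c. apply Rdiv_lt_0_compat; [|lra]. repeat apply Rmult_lt_0_compat; lra. }
  assert (HCSR : CSR = a + b) by (unfold a, b; ring).
  set (z := - (a / c) * exp (- b - a / c)).
  assert (Ew1 : w1 = Wm1 z) by reflexivity.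
  assert (El1 : lam1 = (- (1 / a) * w1 - 1 / c) / (1 - (1 / a) * w1 - 1 / c)) by reflexivity.
  set (q := (c - 1) / exp 1).
  set (t := W0 q).
  set (V := exp (t + 1)).
  assert (El2 : lam2 = (V - 1) / (V + c - 1)) by reflexivity.
  assert (Els : lamstar = Rmax lam1 lam2) by reflexivity.
  assert (Ez : z = - (a / c) * exp (- b - a / c)) by reflexivity.
  assert (Eq : q = (c - 1) / exp 1) by reflexivity.
  assert (Et : t = W0 q) by reflexivity.
  assert (EV : V = exp (t + 1)) by reflexivity.
  clearbody CSR CSD a b c w1 lam1 lam2 lamstar z q t V.
  subst CSR.
  assert (Hac : 0 < a / c) by (apply Rdiv_lt_0_compat; lra).
  assert (Hexpb : exp (- b) < 1) by (rewrite <- exp_0; apply exp_increasing; lra).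
  assert (Hzh : z = hW (- (a / c)) * exp (- b)).
  { rewrite Ez. unfold hW. replace (- b - a / c) with (- b + - (a / c)) by ring.
    rewrite exp_plus. ring. }
  assert (Hh0 : hW (- (a / c)) < 0).
  { unfold hW. pose proof (exp_pos (- (a / c))). nra. }
  assert (Hzgt : hW (- (a / c)) < z).
  { rewrite Hzh. pose proof (exp_pos (- b)). nra. }
  assert (Hz0 : z < 0) by (rewrite Hzh; pose proof (exp_pos (- b)); nra).
  assert (Hzge : - / exp 1 <= z) by (pose proof (hW_ge (- (a / c))); lra).
  destruct (Wm1_spec z Hzge Hz0) as [Hw1a Hw1b]. rewrite <- Ew1 in Hw1a, Hw1b.
  assert (Hw1lt : w1 < - (a / c)).
  { destruct (Rlt_le_dec w1 (- (a / c))) as [H|H]; auto. exfalso.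
    destruct H as [H|H].
    - pose proof (hW_decr _ _ Hw1a H). unfold hW in *. lra.
    - unfold hW in *. rewrite H in Hzgt. lra. }
  set (y1 := - (1 / a) * w1 - 1 / c).
  assert (Hy1 : 0 < y1).
  { assert (y1 = / a * (- w1 - a / c)) by (unfold y1; field; lra).
    rewrite H. apply Rmult_lt_0_compat. apply Rinv_0_lt_compat; lra. lra. }
  assert (Hlam1 : lam1 = y1 / (1 + y1)).
  { rewrite El1. unfold y1. f_equal. ring. }
  assert (Hv1 : 1 + c * y1 = - (c / a) * w1) by (unfold y1; field; lra).
  assert (Hexp : - (c / a) * w1 = exp (- b - a / c - w1)).
  { assert (E1 : exp (- b - a / c - w1) * exp w1 = exp (- b - a / c))
      by (rewrite <- exp_plus; f_equal; ring).
    apply Rmult_eq_reg_r with (exp w1); [| pose proof (exp_pos w1); lra].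
    rewrite E1. replace (- (c / a) * w1 * exp w1) with (- (c / a) * (w1 * exp w1)) by ring.
    rewrite Hw1b, Ez. field. lra. }
  assert (HG1 : a * y1 - b - ln (1 + c * y1) = 0).
  { rewrite Hv1, Hexp, ln_exp. unfold y1. field. split; lra. }
  assert (Hl1 : 0 < lam1 < 1).
  { rewrite Hlam1. split. apply Rdiv_lt_0_compat; lra.
    apply Rmult_lt_reg_r with (1 + y1). lra. unfold Rdiv. rewrite Rmult_assoc, Rinv_l; lra. }
  assert (Hy1l : lam1 / (1 - lam1) = y1) by (rewrite Hlam1; field; lra).
  assert (Heq1 : lam1 * (a + b) = f1 b c lam1).
  { pose proof (Grel a b c lam1 ltac:(lra)). rewrite Hy1l, HG1 in H. lra. }
  assert (Huniq1 : forall lam, 0 < lam < 1 -> lam * (a + b) = f1 b c lam -> lam = lam1).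
  { intros l Hl Heq. pose proof (Grel a b c l ltac:(lra)) as HG.
    set (y := l / (1 - l)) in HG.
    assert (Hy : 0 < y) by (unfold y; apply Rdiv_lt_0_compat; lra).
    assert (HG0 : a * y - b - ln (1 + c * y) = 0).
    { assert ((1 - l) * (a * y - b - ln (1 + c * y)) = 0) by lra.
      apply Rmult_integral in H. destruct H; lra. }
    assert (Hcy : 1 + c * y = exp (a * y - b)).
    { rewrite <- (exp_ln (1 + c * y)) by nra. f_equal. lra. }
    set (w := - a * (y + 1 / c)).
    assert (Hwz : w * exp w = z).
    { assert (w = - (a / c) * (1 + c * y)) by (unfold w; field; lra).
      rewrite H at 1. rewrite Hcy, Ez.
      replace (- (a / c) * exp (a * y - b) * exp w) with (- (a / c) * (exp (a * y - b) * exp w)) by ring.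
      rewrite <- exp_plus. f_equal. f_equal. unfold w. field. lra. }
    assert (Hwlt : w < - (a / c)).
    { unfold w. assert (0 < a * y) by nra. assert (a * (1 / c) = a / c) by (field; lra). nra. }
    assert (Hwm1 : w <= -1).
    { destruct (Rle_lt_dec w (-1)) as [H|H]; auto. exfalso.
      pose proof (hW_incr _ _ (Rlt_le _ _ H) Hwlt). unfold hW in *. lra. }
    pose proof (Wm1_uniq z w Hzge Hz0 Hwm1 Hwz) as Hww. rewrite <- Ew1 in Hww.
    assert (y = y1) by (unfold y1; rewrite <- Hww; unfold w; field; lra).
    rewrite Hlam1, <- H. unfold y. field. lra. }
  assert (Hq : - / exp 1 <= q).
  { rewrite Eq. unfold Rdiv. pose proof (Rinv_0_lt_compat _ (exp_pos 1)). nra. }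
  destruct (W0_spec q Hq) as [Hta Htb]. rewrite <- Et in Hta, Htb.
  assert (Hcm1 : c - 1 = t * exp t * exp 1).
  { rewrite Htb, Eq. field. pose proof (exp_pos 1). lra. }
  assert (Ht1 : -1 < t).
  { destruct Hta as [H|H]; auto. exfalso. rewrite <- H in Hcm1.
    replace (-1 * exp (-1) * exp 1) with (-1) in Hcm1 by (rewrite Rmult_assoc, <- exp_plus; replace (-1 + 1) with 0 by ring; rewrite exp_0; ring). lra. }
  assert (HV : 1 < V) by (rewrite EV; pose proof (exp_increasing 0 (t + 1) ltac:(lra)); rewrite exp_0 in H; lra).
  assert (Hl2 : 0 < lam2 < 1).
  { rewrite El2. split. apply Rdiv_lt_0_compat; lra.
    apply Rmult_lt_reg_r with (V + c - 1). lra. unfold Rdiv. rewrite Rmult_assoc, Rinv_l; lra. }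
  assert (Hvl2 : vv c lam2 = V).
  { unfold vv. rewrite El2. field. split; lra. }
  assert (HD2 : DD c lam2 = 0).
  { unfold DD. rewrite Hvl2, EV, ln_exp, exp_plus, Hcm1. field. split; apply Rgt_not_eq, exp_pos. }
  assert (Huniq2 : forall l, 0 < l < 1 -> derivable_pt_lim (f1 b c) l 0 -> l = lam2).
  { intros l Hl Hd. pose proof (uniqueness_limite _ _ _ _ Hd (f1_deriv b c l Hc Hl)) as HD.
    pose proof (vv_gt1 c l Hc Hl) as Hv. pose proof (vv_eq c l ltac:(lra)) as Hve.
    set (V' := vv c l) in *.
    set (t' := ln V' - 1).
    assert (Ht' : -1 <= t').
    { unfold t'. assert (0 < ln V') by (rewrite <- ln_1; apply ln_increasing; lra). lra. }
    assert (Ht'e : t' * exp t' = q).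
    { assert (exp t' = V' * / exp 1).
      { unfold t'. unfold Rminus. rewrite exp_plus, exp_ln by lra. f_equal. rewrite <- exp_Ropp. reflexivity. }
      rewrite H. unfold DD in HD. fold V' in HD. rewrite Eq.
      assert (t' = (c - 1) / V') by (unfold t'; lra). rewrite H0. field. split. pose proof (exp_pos 1). lra. lra. }
    pose proof (W0_uniq q t' Hq Ht' Ht'e) as Htt. rewrite <- Et in Htt.
    assert (HVV : V = V') by (rewrite EV, <- Htt; unfold t'; replace (ln V' - 1 + 1) with (ln V') by ring; apply exp_ln; lra).
    rewrite El2, HVV.
    assert (V' - 1 = l * (V' + c - 1)) by nra. rewrite H. field. lra. }
  assert (Hder2 : derivable_pt_lim (f1 b c) lam2 0).
  { rewrite <- HD2. apply f1_deriv; auto. }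
  split; [split; [exact Hl1 | split; [exact Heq1 | exact Huniq1]] |].
  split; [split; [exact Hl2 | split; [exact Hder2 | exact Huniq2]] |].
  rewrite Els. unfold Rmax. destruct (Rle_dec lam1 lam2) as [Hle|Hle].
  - destruct Hle as [Hlt|Heq12].
    +
      split; [exact Hl2|].
      assert (Hy2 : y1 < lam2 / (1 - lam2)).
      { rewrite <- Hy1l. unfold Rdiv. apply Rmult_le_0_lt_compat; try lra.
        left; apply Rinv_0_lt_compat; lra. apply Rinv_lt_contravar; nra. }
      set (y2 := lam2 / (1 - lam2)) in Hy2.
      assert (HG2 : 0 <= a * y2 - b - ln (1 + c * y2)).
      { assert (E : ln (1 + c * y2) = ln (1 + c * y1) + ln ((1 + c * y2) / (1 + c * y1))).
        { rewrite <- ln_mult. f_equal. field. nra. nra. apply Rdiv_lt_0_compat; nra. }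
        pose proof (ln_le_xm1 ((1 + c * y2) / (1 + c * y1)) ltac:(apply Rdiv_lt_0_compat; nra)).
        assert (Q : (1 + c * y2) / (1 + c * y1) - 1 = c * (y2 - y1) / (1 + c * y1)) by (field; nra).
        assert (Ha1 : c <= a * (1 + c * y1)).
        { rewrite Hv1. replace (a * (- (c / a) * w1)) with (c * (- w1)) by (field; lra). nra. }
        assert (c * (y2 - y1) / (1 + c * y1) <= a * (y2 - y1)).
        { apply Rmult_le_reg_r with (1 + c * y1). nra. unfold Rdiv.
          rewrite Rmult_assoc, Rinv_l by nra. nra. }
        lra. }
      pose proof (Grel a b c lam2 ltac:(lra)) as HG. fold y2 in HG.
      assert (Hmin : f1 b c lam2 <= lam2 * (a + b)) by nra.
      rewrite Rmin_right by exact Hmin.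
      intros l Hl. eapply Rle_trans. apply Rmin_r.
      pose proof (f1_tangent b c l lam2 Hc Hl Hl2). rewrite HD2 in H. lra.
    + rewrite <- Heq12 in HD2 |- *. split; [exact Hl1|]. rewrite Rmin_left by lra.
      intros l Hl. destruct (Rle_lt_dec l lam1) as [H1|H1].
      * eapply Rle_trans. apply Rmin_l. nra.
      * eapply Rle_trans. apply Rmin_r.
        pose proof (f1_tangent b c l lam1 Hc Hl Hl1). rewrite HD2 in H. lra.
  -
    split; [exact Hl1|]. rewrite Rmin_left by lra.
    assert (HD1 : DD c lam1 <= 0).
    { rewrite <- HD2. unfold DD. apply psi_mono; auto. apply vv_gt1; auto.
      apply vv_mono; lra. }
    intros l Hl. destruct (Rle_lt_dec l lam1) as [H1|H1].
    * eapply Rle_trans. apply Rmin_l. nra.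
    * eapply Rle_trans. apply Rmin_r.
      pose proof (f1_tangent b c l lam1 Hc Hl Hl1). nra.
Qed.
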